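(* Let $G=\langle a,b\mid aba^{-1}=b^{-1}\rangle$ (the fundamental group of the Klein bottle). For $d\geq1$ put $$a_d=\begin{cases}1 & d\text{ odd},\\ \frac{d+6}{4} & d\equiv 2 \pmod 4,\\ \frac{d+4}{4} & d\equiv 0\pmod 4.\end{cases}$$ Then for every $n\geq1$ the number of conjugacy classes of subgroups of index $n$ in $G$ equals $\sum_{d\mid n}a_d$. *)

(* Defs.v *)
From mathcomp Require Import all_boot all_order all_algebra.
Set Implicit Arguments. Unset Strict Implicit. Unset Printing Implicit Defensive.
Import Order.TTheory GRing.Theory Num.Theory.
Local Open Scope ring_scope.

(* The Klein bottle group G = < a, b | a b a^-1 = b^-1 >, realised by its
   normal form: the pair (m, k) stands for b^m a^k.  Since a^k b^m = b^((-1)^k m) a^k,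
   (b^m a^k)(b^m' a^k') = b^(m + (-1)^k m') a^(k+k'), i.e. G = Z \rtimes Z. *)
Definition KG := (int * int)%type.

Definition ksign (k : int) : int := if odd `|k|%N then -1 else 1.

Definition kmul (x y : KG) : KG := (x.1 + ksign x.2 * y.1, x.2 + y.2).
Definition kinv (x : KG) : KG := (- (ksign x.2 * x.1), - x.2).
Definition kone : KG := (0, 0).
Definition ka : KG := (0, 1).
Definition kb : KG := (1, 0).

Definition is_subgroup (H : KG -> Prop) : Prop :=
  H kone /\ (forall x y, H x -> H y -> H (kmul x y)) /\ (forall x, H x -> H (kinv x)).

Definition has_index (H : KG -> Prop) (n : nat) : Prop :=
  exists r : 'I_n -> KG, forall g, exists! i : 'I_n, H (kmul (kinv (r i)) g).

Definition conjugate (H K : KG -> Prop) : Prop :=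
  exists x : KG, forall g, K g <-> H (kmul (kmul (kinv x) g) x).

Definition num_conj_classes_index (n N : nat) : Prop :=
  exists C : 'I_N -> (KG -> Prop),
    (forall i, is_subgroup (C i) /\ has_index (C i) n) /\
    (forall i j, conjugate (C i) (C j) -> i = j) /\
    (forall H, is_subgroup H -> has_index H n -> exists i, conjugate H (C i)).

Definition a_seq (d : nat) : nat :=
  if odd d then 1%N
  else if (d %% 4 == 2)%N then ((d + 6) %/ 4)%N
  else ((d + 4) %/ 4)%N.

(* Main.v *)
Require Import Defs.
From mathcomp Require Import all_boot all_order all_algebra.
From mathcomp Require Import zify ring lra.
Import Order.TTheory GRing.Theory Num.Theory.
Set Implicit Arguments. Unset Strict Implicit. Unset Printing Implicit Defensive.
Local Open Scope ring_scope.

Lemma small_mul (d m s : int) : 0 < s -> - s < d < s -> d = m * s -> d = 0.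
Proof. move=> s0 /andP[h1 h2] e; subst d. have [m0|[m1|m2]] : m = 0 \/ 1 <= m \/ m <= -1 by lia.
- by rewrite m0 mul0r.
- have : 1 * s <= m * s by rewrite ler_pM2r. lia.
- have : m * s <= -1 * s by rewrite ler_pM2r. lia.
Qed.

Lemma ksignD a b : ksign (a + b) = ksign a * ksign b.
Proof. rewrite /ksign; do 3 case: ifP => ?; lia. Qed.
Lemma ksignN a : ksign (- a) = ksign a.
Proof. rewrite /ksign; do 2 case: ifP => ?; lia. Qed.
Lemma ksign0 : ksign 0 = 1. Proof. by []. Qed.
Lemma ksign_sq a : ksign a * ksign a = 1.
Proof. rewrite /ksign; case: ifP => ?; lia. Qed.
Lemma ksign_cases a : ksign a = 1 \/ ksign a = -1.
Proof. rewrite /ksign; case: ifP => ?; lia. Qed.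
Definition esg (t : nat) (j : int) : int := if odd t then ksign j else 1.
Lemma ksignM (j : int) (t : nat) : ksign (j * t%:Z) = esg t j.
Proof. rewrite /esg /ksign abszM /= oddM; case: (odd t); rewrite ?andbT ?andbF //. Qed.

Lemma kmulA x y z : kmul (kmul x y) z = kmul x (kmul y z).
Proof. case: x => x1 x2; case: y => y1 y2; case: z => z1 z2.
rewrite /kmul /= ksignD; congr (_, _); ring. Qed.
Lemma kmul1g x : kmul kone x = x.
Proof. case: x => x1 x2; rewrite /kmul /kone /= ksign0; congr (_,_); ring. Qed.
Lemma kmulg1 x : kmul x kone = x.
Proof. case: x => x1 x2; rewrite /kmul /kone /=; congr (_,_); ring. Qed.
Lemma kmulVg x : kmul (kinv x) x = kone.
Proof. case: x => x1 x2; rewrite /kmul /kinv /kone /= ksignN; congr (_,_); ring. Qed.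
Lemma kmulgV x : kmul x (kinv x) = kone.
Proof. case: x => x1 x2; rewrite /kmul /kinv /kone /=; congr (_,_).
 rewrite mulrN mulrA ksign_sq; ring. ring. Qed.
Lemma kinvK x : kinv (kinv x) = x.
Proof. case: x => x1 x2; rewrite /kinv /= ksignN; congr (_,_).
 rewrite mulrN opprK mulrA ksign_sq; ring. ring. Qed.
Lemma kinvM x y : kinv (kmul x y) = kmul (kinv y) (kinv x).
Proof. case: x => x1 x2; case: y => y1 y2; rewrite /kinv /kmul /= !ksignD ksignN.
congr (_,_); last ring.
by case: (ksign_cases x2) => ->; case: (ksign_cases y2) => ->; ring. Qed.

Section Sub.
Variable H : KG -> Prop.
Hypothesis HH : is_subgroup H.
Lemma sub1 : H kone. Proof. by case: HH. Qed.
Lemma subM x y : H x -> H y -> H (kmul x y). Proof. by case: HH => _ [hm hv]; auto. Qed.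
Lemma subV x : H x -> H (kinv x). Proof. by case: HH => _ [hm hv]; auto. Qed.
Lemma coset_same a g g' : H (kmul (kinv a) g) -> H (kmul (kinv a) g') -> H (kmul (kinv g) g').
Proof. move=> h1 h2. have := subM (subV h1) h2.
by rewrite kinvM kinvK kmulA -(kmulA a) kmulgV kmul1g. Qed.
Lemma coset_move a g g' : H (kmul (kinv a) g) -> H (kmul (kinv g) g') -> H (kmul (kinv a) g').
Proof. move=> h1 h2. have := subM h1 h2. by rewrite kmulA -(kmulA g) kmulgV kmul1g. Qed.
End Sub.

Definition cf (t : nat) (j : int) : int := if odd t then (if odd (absz j) then 1 else 0) else j.
Definition rep (s t : nat) (r : int) (g : KG) : Prop :=
  exists j m : int, g.2 = j * t%:Z /\ g.1 = m * s%:Z + cf t j * r.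

Lemma cfD t j j' : cf t (j + j') = cf t j + esg t j * cf t j'.
Proof. rewrite /cf /esg /ksign; case: (odd t) => //; last ring.
do 3 case: ifP => ?; lia. Qed.
Lemma cfN t j : cf t (- j) = - (esg t j * cf t j).
Proof. rewrite /cf /esg /ksign; case: (odd t) => //; last ring.
do 2 case: ifP => ?; lia. Qed.
Lemma cf0 t : cf t 0 = 0. Proof. by rewrite /cf; case: (odd t). Qed.
Lemma esg_cases t j : esg t j = 1 \/ esg t j = -1.
Proof. rewrite /esg; case: (odd t) => //; [exact: ksign_cases | by left]. Qed.

Lemma rep_sub s t r : is_subgroup (rep s t r).
Proof. split; [|split].
- exists 0, 0; rewrite /kone /= cf0; split; ring.
- case=> x k [x' k'] [j [m [/= -> ->]]] [j' [m' [/= -> ->]]].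
  rewrite /kmul /= ksignM /rep /=. exists (j + j'), (m + esg t j * m'); split; first ring.
  rewrite cfD. ring.
- case=> x k [j [m [/= -> ->]]]. rewrite /kinv /= ksignM /rep /=.
  exists (- j), (- (esg t j * m)); split; first ring. rewrite cfN; ring.
Qed.

Lemma kmul_inv_pair (a b x k : int) : kmul (kinv (a, b)) (x, k) = (ksign b * (x - a), k - b).
Proof. rewrite /kmul /kinv /= ksignN; congr (_,_); ring. Qed.

Lemma esg2 t j : esg t j * esg t j = 1.
Proof. by case: (esg_cases t j) => ->. Qed.
Lemma ksign2 j : ksign j * ksign j = 1.
Proof. by case: (ksign_cases j) => ->. Qed.

Lemma rep_index s t r : (0 < s)%N -> (0 < t)%N -> has_index (rep s t r) (s * t).
Proof.
move=> s0 t0.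
pose rho (i : 'I_(s*t)) : KG := (Posz (i %% s), Posz (i %/ s)).
exists rho => -[x k].
pose q := absz (k %% t)%Z. pose J := (k %/ t)%Z. pose e := ksign q.
pose i1 := absz ((x - e * (cf t J * r)) %% s)%Z.
have hq : (q < t)%N by rewrite /q; lia.
have hi1 : (i1 < s)%N by rewrite /i1; lia.
have lt : (q * s + i1 < s * t)%N.
  have : (q * s + i1 < q * s + s)%N by rewrite ltn_add2l.
  move=> h; apply: (leq_trans h). by rewrite -mulSnr mulnC leq_mul2l hq orbT.
have Ediv : ((q * s + i1) %/ s = q)%N by rewrite divnMDl // divn_small // addn0.
have Emod : ((q * s + i1) %% s = i1)%N by rewrite modnMDl modn_small.
exists (Ordinal lt); split.
- rewrite /rho /= Ediv Emod kmul_inv_pair. exists J, (e * ((x - e * (cf t J * r)) %/ s)%Z).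
  split=> /=.
  + rewrite /q /J. lia.
  + have hx : x = ((x - e * (cf t J * r)) %/ s)%Z * s + Posz i1 + e * (cf t J * r) by rewrite /i1; lia.
    rewrite {1}hx. rewrite -/e. have := ksign2 q. rewrite -/e => he.
    set D := ((x - _) %/ s)%Z; set C := cf t J * r. transitivity (e * D * s + (e * e) * C); first ring. rewrite he; ring.
- move=> i'; rewrite /rho kmul_inv_pair => -[J' [M' [/= e1 e2]]].
  apply: val_inj => /=.
  have hq' : (i' %/ s < t)%N by rewrite ltn_divLR //; have := ltn_ord i'; lia.
  have hr' : (i' %% s < s)%N by rewrite ltn_mod.
  have hi := divn_eq i' s.
  move: hq' hr' e1 e2 hi. generalize (i' %/ s)%N (i' %% s)%N => u v hu hv e1 e2 hi.
  have hk : k = J * t + Posz q by rewrite /J /q; lia.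
  have Eq : Posz u = Posz q.
    have h : Posz u - Posz q = (J - J') * t by lia.
    apply/eqP; rewrite -subr_eq0; apply/eqP.
    apply: (small_mul _ _ h); lia.
  have EJ : J' = J.
    have : (J' - J) * t = 0 by lia.
    move/eqP; rewrite mulf_eq0 => /orP[/eqP|]; first lia. lia.
  subst J'.
  have Eq' : u = q by case: Eq.
  subst u. rewrite -/e in e2.
  have hx : x = ((x - e * (cf t J * r)) %/ s)%Z * s + Posz i1 + e * (cf t J * r) by rewrite /i1; lia.
  have e3 : x - Posz v = e * (M' * s + cf t J * r).
    rewrite -e2 mulrA. have := ksign2 q. rewrite -/e => ->. ring.
  have Er : Posz v = Posz i1.
    have h : Posz v - Posz i1 = (((x - e * (cf t J * r)) %/ s)%Z - e * M') * s by lia.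
    apply/eqP; rewrite -subr_eq0; apply/eqP.
    apply: (small_mul _ _ h); lia.
  case: Er => Er. by rewrite hi Er.
Qed.

From Stdlib Require Import ClassicalEpsilon.

Definition asb (P : Prop) : bool := if excluded_middle_informative P then true else false.
Lemma asbE (P : Prop) : asb P <-> P.
Proof. rewrite /asb; case: excluded_middle_informative => //. Qed.

Lemma has_index_ext H K n : (forall g, H g <-> K g) -> has_index H n -> has_index K n.
Proof. move=> E [r hr]; exists r => g. case: (hr g) => i [hi hu].
exists i; split; first by apply/E. by move=> j /E; apply: hu. Qed.

Lemma exu_ex (T : Type) (P : T -> Prop) : (exists! x, P x) -> exists x, P x.
Proof. by case=> x [h _]; exists x. Qed.

Lemma coset_fun H n : has_index H n -> exists (r : 'I_n -> KG) (f : KG -> 'I_n),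
  (forall g, H (kmul (kinv (r (f g))) g)) /\ (forall g i, H (kmul (kinv (r i)) g) -> i = f g).
Proof. move=> [r hr]. exists r.
exists (fun g => proj1_sig (constructive_indefinite_description _ (exu_ex (hr g)))).
split=> [g|g i hi]; case: constructive_indefinite_description => /= j hj //.
case: (hr g) => j' [_ hu]. by rewrite -(hu _ hi) -(hu _ hj).
Qed.

Lemma index_le H n m : is_subgroup H -> has_index H n -> has_index H m -> (n <= m)%N.
Proof.
move=> HH /coset_fun [r [f [hf hu]]] /coset_fun [r' [f' [hf' hu']]].
have inj : injective (fun i => f' (r i)).
  move=> i i' e. have h1 := hf' (r i). have h2 := hf' (r i'). rewrite e in h1.
  have h3 := coset_same HH h1 h2.
  have h4 : H (kmul (kinv (r i')) (r i')) by rewrite kmulVg; exact: sub1.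
  by rewrite (hu _ _ h3) -(hu _ _ h4).
by have := leq_card _ inj; rewrite !card_ord.
Qed.

Lemma index_unique H n m : is_subgroup H -> has_index H n -> has_index H m -> n = m.
Proof. move=> HH h1 h2; apply/eqP; rewrite eqn_leq (index_le HH h1 h2) (index_le HH h2 h1). by []. Qed.

Definition Pw (t : nat) (r0 j : int) : KG := (cf t j * r0, j * t%:Z).

Lemma cf1 t : cf t 1 = 1. Proof. by rewrite /cf; case: (odd t). Qed.

Section Class.
Variable H : KG -> Prop.
Hypothesis HH : is_subgroup H.

Lemma pow_b a : H (a, 0) -> forall z : int, H (z * a, 0).
Proof. move=> ha.
have hn : forall N : nat, H (N%:Z * a, 0).
  elim=> [|N IH]; first by rewrite mul0r; exact: (sub1 HH).
  have := subM HH IH ha. rewrite /kmul /= ksign0 mul1r addr0.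
  by have -> : N%:Z * a + a = N.+1%:Z * a by rewrite -addn1 PoszD mulrDl mul1r.
case=> N; first exact: hn.
have := subV HH (hn N.+1). rewrite /kinv /= ksign0 mul1r oppr0.
by rewrite NegzE mulNr.
Qed.

Lemma pow_a t r0 : H (r0, t%:Z) -> forall j : int, H (Pw t r0 j).
Proof. move=> ha.
have step : forall j, kmul (Pw t r0 j) (r0, t%:Z) = Pw t r0 (j + 1).
  move=> j; rewrite /kmul /Pw /= ksignM cfD cf1; congr (_,_); ring.
have hn : forall N : nat, H (Pw t r0 N).
  elim=> [|N IH]; first by rewrite /Pw cf0 !mul0r; exact: (sub1 HH).
  have := subM HH IH ha. by rewrite step -addn1 PoszD.
have neg : forall j, kinv (Pw t r0 j) = Pw t r0 (- j).
  move=> j; rewrite /kinv /Pw /= ksignM cfN; congr (_,_); ring.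
case=> N; first exact: hn.
have := subV HH (hn N.+1). by rewrite neg NegzE.
Qed.
End Class.

Lemma kmul_b (a b : int) : kmul (a, 0) (b, 0) = (a + b, 0).
Proof. by rewrite /kmul /= ksign0 mul1r addr0. Qed.

Lemma classify H n : is_subgroup H -> has_index H n ->
  exists s t (r0 : int), [/\ (0 < s)%N, (0 < t)%N, (s * t = n)%N & forall g, H g <-> rep s t r0 g].
Proof.
move=> HH hi. have [r [f [hf hu]]] := coset_fun hi.
have fsame : forall g g', f g = f g' -> H (kmul (kinv g) g').
  move=> g g' e. apply: (coset_same HH (hf g)). by rewrite e; apply: hf.
have nonemp : forall F : 'I_n.+1 -> 'I_n, exists i, exists2 j, i != j & F i = F j.
  move=> F; apply/injectivePn; apply/negP => /injectiveP inj.
  by have := leq_card _ inj; rewrite !card_ord ltnn.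
have [P [P0 HP]] : exists P : nat, (0 < P)%N /\ H (P%:Z, 0).
  have [i [j ij e]] := nonemp (fun i : 'I_n.+1 => f (Posz i, 0)).
  have := fsame _ _ e. rewrite kmul_inv_pair ksign0 mul1r subrr.
  have : i != j :> nat by [].
  case: (ltngtP i j) => // h _ hH.
  + exists (j - i)%N; split; first by rewrite subn_gt0.
    have -> : Posz (j - i)%N = Posz j - Posz i by move: h; lia. by [].
  + exists (i - j)%N; split; first by rewrite subn_gt0.
    have := subV HH hH. rewrite /kinv /= ksign0 mul1r oppr0.
    have -> : - (Posz j - Posz i) = Posz (i - j) by lia. by [].
have [Q [Q0 [x0 HQ]]] : exists Q : nat, (0 < Q)%N /\ exists x, H (x, Q%:Z).
  have [i [j ij e]] := nonemp (fun i : 'I_n.+1 => f (0, Posz i)).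
  have := fsame _ _ e. rewrite kmul_inv_pair.
  have : i != j :> nat by [].
  case: (ltngtP i j) => // h _ hH.
  + exists (j - i)%N; split; first by rewrite subn_gt0.
    eexists. have -> : Posz (j - i)%N = Posz j - Posz i by move: h; lia. exact: hH.
  + exists (i - j)%N; split; first by rewrite subn_gt0.
    have := subV HH hH. rewrite /kinv /=.
    have -> : - (Posz j - Posz i) = Posz (i - j) by lia. move=> h'; eexists; exact: h'.
have exs : exists p, (0 < p)%N && asb (H (p%:Z, 0)).
  by exists P; rewrite P0 /=; apply/asbE.
have ext : exists q, (0 < q)%N && asb (exists x, H (x, q%:Z)).
  by exists Q; rewrite Q0 /=; apply/asbE; exists x0.
have [s /andP[s0 /asbE Hs] smin] := ex_minnP exs.
have [t /andP[t0 /asbE [r0 Ht]] tmin] := ex_minnP ext.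
have Hb : forall x, H (x, 0) -> exists m : int, x = m * s%:Z.
  move=> x hx. exists (x %/ s)%Z.
  have := subM HH hx (pow_b HH Hs (- (x %/ s)%Z)). rewrite kmul_b => h.
  have hm : (0 <= (x %% s)%Z < s)%R by lia.
  have [z0|zp] : (x %% s)%Z = 0 \/ (0 < (x %% s)%Z)%R by lia.
    by lia.
  have : (s <= absz (x %% s)%Z)%N.
    apply: smin; rewrite (_ : (0 < _)%N = true) /=; last by lia.
    apply/asbE. have -> : Posz (absz (x %% s)%Z) = x + - (x %/ s)%Z * s by lia. exact: h.
  lia.
have Ht' : forall x k, H (x, k) -> exists J : int, k = J * t%:Z.
  move=> x k hx. exists (k %/ t)%Z.
  have := subM HH hx (pow_a HH Ht (- (k %/ t)%Z)). rewrite /kmul /Pw /= => h.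
  have [z0|zp] : (k %% t)%Z = 0 \/ (0 < (k %% t)%Z)%R by lia.
    by lia.
  have : (t <= absz (k %% t)%Z)%N.
    apply: tmin; rewrite (_ : (0 < _)%N = true) /=; last by lia.
    apply/asbE. eexists. have -> : Posz (absz (k %% t)%Z) = k + - (k %/ t)%Z * t by lia. exact: h.
  lia.
have Hrep : forall g, H g <-> rep s t r0 g.
  case=> x k; split.
  - move=> hx. have [J eJ] := Ht' _ _ hx.
    have := subM HH (subV HH (pow_a HH Ht J)) hx.
    rewrite /Pw kmul_inv_pair ksignM eJ subrr => /Hb [m em].
    exists J, (esg t J * m); split => //=.
    have := esg2 t J. move: em; set e := esg t J => em he.
    have h2 : x - cf t J * r0 = e * (m * s) by rewrite -em mulrA he mul1r.
    lia.
  - move=> [J [m [/= -> ->]]].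
    have := subM HH (pow_b HH Hs m) (pow_a HH Ht J).
    by rewrite /Pw /kmul /= ksign0 mul1r add0r.
exists s, t, r0; split => //.
apply/esym; apply: (index_unique (rep_sub s t r0) _ (rep_index r0 s0 t0)).
apply: has_index_ext Hrep hi.
Qed.

Lemma kinv1 : kinv kone = kone. Proof. by rewrite /kinv /kone /= mulr0 oppr0. Qed.

Lemma conj_refl H : conjugate H H.
Proof. exists kone => g. by rewrite kinv1 kmul1g kmulg1. Qed.

Lemma conj_sym H K : conjugate H K -> conjugate K H.
Proof. move=> [x hx]; exists (kinv x) => g. rewrite hx kinvK.
have -> : kmul (kmul (kinv x) (kmul (kmul x g) (kinv x))) x = g.
  by rewrite !kmulA kmulVg kmulg1 -kmulA kmulVg kmul1g.
by []. Qed.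

Lemma conj_trans H K L : conjugate H K -> conjugate K L -> conjugate H L.
Proof. move=> [x hx] [y hy]; exists (kmul y x) => g. rewrite hy hx.
by rewrite kinvM !kmulA. Qed.

Lemma conj_extL H H' K : (forall g, H g <-> H' g) -> conjugate H K -> conjugate H' K.
Proof. move=> E [x hx]; exists x => g; rewrite hx; exact: E. Qed.

Lemma conj_extR H K K' : (forall g, K g <-> K' g) -> conjugate H K -> conjugate H K'.
Proof. move=> E [x hx]; exists x => g; rewrite -E; exact: hx. Qed.

Lemma conj_pair (u v y k : int) :
  kmul (kmul (kinv (u, v)) (y, k)) (u, v) = (ksign v * (y - u) + ksign (k - v) * u, k).
Proof. rewrite kmul_inv_pair /kmul /=; congr (_,_); ring. Qed.

Lemma rep_shift s t r z : forall g, rep s t r g <-> rep s t (r + z * s%:Z) g.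
Proof. case=> y k; split => -[j [m [/= e1 e2]]]; exists j.
- exists (m - cf t j * z); split => //; rewrite e2 /=; ring.
- exists (m + cf t j * z); split => //; rewrite e2 /=; ring.
Qed.

Lemma rep_neg s t r : conjugate (rep s t r) (rep s t (- r)).
Proof. exists ka => -[y k]. rewrite /ka conj_pair subr0 mulr0 addr0 (_ : ksign 1 = -1) // mulN1r.
split => -[j [m [/= e1 e2]]]; exists j.
- exists (- m); split => //=; rewrite e2; ring.
- exists (- m); split => //=; rewrite -[y]opprK e2; ring.
Qed.

Lemma esg_odd t j : odd t -> esg t j = 1 - 2 * cf t j.
Proof. rewrite /esg /cf /ksign => ->. case: ifP => ?; lia. Qed.

Lemma conj_pair0 (u y k : int) :
  kmul (kmul (kinv (u, 0)) (y, k)) (u, 0) = (y - u + ksign k * u, k).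
Proof. rewrite conj_pair ksign0 mul1r. have -> : k - 0 = k by ring. by []. Qed.

Lemma rep_two s t r : odd t -> conjugate (rep s t r) (rep s t (r + 2)).
Proof. move=> ot. exists kb => -[y k]. rewrite /kb conj_pair0 mulr1.
split => -[j [m [/= e1 e2]]]; exists j; subst k.
- exists m; split => //=. move: e2. rewrite ksignM esg_odd // => e2. lia.
- exists m; split => //=. move: e2. rewrite ksignM esg_odd // => e2. lia.
Qed.

Definition canon (s t r : nat) : bool :=
  if odd t then (if odd s then r == 0%N else (r <= 1)%N) else (r <= s./2)%N.

Lemma rep_two_iter s t r (N : nat) : odd t -> conjugate (rep s t r) (rep s t (r + 2 * N%:Z)).
Proof. move=> ot; elim: N => [|N IH].
  have -> : r + 2 * 0%:Z = r by lia.
  exact: conj_refl.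
apply: (conj_trans IH). have -> : r + 2 * N.+1%:Z = (r + 2 * N%:Z) + 2 by lia.
exact: rep_two.
Qed.

Lemma rep_eqr s t r r' : r = r' -> conjugate (rep s t r) (rep s t r').
Proof. move=> ->; exact: conj_refl. Qed.

Lemma conj_shiftR s t r1 r2 z : conjugate (rep s t r1) (rep s t r2) ->
  conjugate (rep s t r1) (rep s t (r2 + z * s%:Z)).
Proof. move=> h; apply: conj_extR h => g; exact: rep_shift. Qed.

Lemma normalize s t (r : int) : (0 < s)%N ->
  exists r' : nat, canon s t r' /\ conjugate (rep s t r) (rep s t r').
Proof.
move=> s0. pose r1 := absz (r %% s)%Z.
have hr1 : (r1 < s)%N by rewrite /r1; lia.
suff [r' [c h]] : exists r' : nat, canon s t r' /\ conjugate (rep s t r1) (rep s t r').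
  exists r'; split => //. apply: conj_trans h.
  have -> : r = r1%:Z + (r %/ s)%Z * s by rewrite /r1; lia.
  apply: conj_sym; apply: conj_shiftR; exact: conj_refl.
rewrite /canon. case ot: (odd t).
- case os: (odd s).
  + exists 0%N; split => //. case o1: (odd r1).
    * apply: conj_sym. have := rep_two_iter s 0 ((r1 + s)./2) ot.
      move=> h; apply: (conj_trans h).
      have -> : 0 + 2 * ((r1 + s)./2)%:Z = r1%:Z + 1 * s by move: o1 os; lia.
      apply: conj_sym. apply: (@conj_shiftR s t r1%:Z r1%:Z 1). exact: conj_refl.
    * apply: conj_sym. have := rep_two_iter s 0 (r1./2) ot.
      move=> h; apply: (conj_trans h). apply: rep_eqr. move: o1; lia.
  + exists (r1 %% 2)%N; split; first by lia.
    apply: conj_sym. have := rep_two_iter s (r1 %% 2)%N (r1./2) ot.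
    move=> h; apply: (conj_trans h). apply: rep_eqr. lia.
- case: (leqP r1 s./2) => hle.
  + exists r1; split => //; exact: conj_refl.
  + exists (s - r1)%N; split; first by lia.
    have := rep_neg s t r1. move=> h; apply: (conj_trans h).
    have -> : Posz (s - r1)%N = - (r1%:Z) + 1 * s by lia.
    apply: (@conj_shiftR s t (- r1%:Z) (- r1%:Z) 1). exact: conj_refl.
Qed.

Lemma ksign_nat (t : nat) : ksign t%:Z = if odd t then -1 else 1.
Proof. by []. Qed.

Lemma inv_div s t r s' t' r' : (0 < s)%N -> (0 < t)%N ->
  conjugate (rep s t r) (rep s' t' r') -> (s %| s')%N /\ (t %| t')%N.
Proof.
move=> s0 t0 [[u v] hx]. split.
- have := (hx (Posz s', 0)).1. rewrite conj_pair.
  case. exists 0, 1; rewrite /= cf0; split; ring.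
  move=> j [m [/= e1 e2]].
  have j0 : j = 0.
    move/eqP: e1; rewrite eq_sym mulf_eq0 => /orP[/eqP //|]. lia.
  subst j. move: e2. rewrite cf0 mul0r addr0 ksignD ksignN ksign0 mul1r => e2.
  have E : Posz s' = (ksign v * m) * s.
    by case: (ksign_cases v) => ev; rewrite ev in e2 *; lia.
  apply/dvdnP; exists (absz (ksign v * m)).
  have := congr1 absz E. by rewrite abszM.
- have := (hx (cf t' 1 * r', Posz t')).1. rewrite conj_pair.
  case. exists 1, 0; rewrite /=; split; ring.
  move=> j [m [/= e1 e2]].
  apply/dvdnP; exists (absz j). have := congr1 absz e1. by rewrite abszM.
Qed.

Lemma zero_or_one (d m s : int) : 0 < s -> 0 <= d <= s -> d = m * s -> m = 0 \/ m = 1.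
Proof. move=> s0 /andP[h1 h2] e; subst d. have [m0|[m1|m2]] : m = 0 \/ 2 <= m \/ m <= -1 \/ m = 1 by lia.
- by left.
- have : 2 * s <= m * s by rewrite ler_pM2r. lia.
- case: m2 => [m2|->]; last by right.
  have : m * s <= -1 * s by rewrite ler_pM2r. lia.
Qed.

Lemma inv_r s t r r' : (0 < s)%N -> (0 < t)%N -> canon s t r -> canon s t r' ->
  conjugate (rep s t r) (rep s t r') -> r = r'.
Proof.
move=> s0 t0 cr cr' [[u v] hx].
have := (hx (cf t 1 * r', Posz t)).1. rewrite conj_pair.
case. exists 1, 0; rewrite /=; split; ring.
move=> j [m [/= e1 e2]].
have j1 : j = 1.
  have : (j - 1) * t = 0 by lia.
  move/eqP; rewrite mulf_eq0 => /orP[/eqP|]; lia.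
subst j. move: e2 cr cr'. rewrite cf1 !mul1r ksignD ksignN ksign_nat /canon.
case ot: (odd t).
- case os: (odd s); first by move=> _ /eqP -> /eqP ->.
  move=> e2 cr cr'. have [h hs] : exists h, s = (2 * h)%N by exists s./2; lia.
  subst s. case: (ksign_cases v) => ev; rewrite ev in e2; apply/eqP; lia.
- move=> e2 cr cr'. case: (ksign_cases v) => ev; rewrite ev in e2.
  + have : r'%:Z - r%:Z = 0.
      apply: (small_mul (m := m) (s := s)); lia.
    lia.
  + have : m * (-1) = 0 \/ m * (-1) = 1.
      apply: (zero_or_one (d := r%:Z + r'%:Z) (s := s)); lia.
    case=> hm.
    * have : m = 0 by lia. move=> m0; subst m; lia.
    * have : m = -1 by lia. move=> m0; subst m; lia.
Qed.

Local Open Scope nat_scope.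

Lemma a_seq_odd d : odd d -> a_seq d = 1%N.
Proof. by rewrite /a_seq => ->. Qed.
Lemma a_seq_even d : ~~ odd d -> a_seq d = ((d./2)./2 + odd (d./2)).+1.
Proof. move=> ev; rewrite /a_seq (negbTE ev); case: ifP => /eqP h; lia. Qed.

Definition phi (n d k : nat) : nat * nat * nat :=
  if k == 0 then (d, n %/ d, 0) else if k <= (d./2)./2 then (d./2, n %/ d./2, k)
  else (n %/ d./2, d./2, 1).
Definition psi (T : nat * nat * nat) : nat * nat :=
  let: (s, t, r) := T in if r == 0 then (s, 0) else if ~~ odd t then (2 * s, r) else (2 * t, t.+1./2).
Definition valid (n : nat) (T : nat * nat * nat) : bool :=
  let: (s, t, r) := T in [&& 0 < s, 0 < t, s * t == n & canon s t r].
Definition pairs (n : nat) : seq (nat * nat) := [seq (d, k) | d <- divisors n, k <- iota 0 (a_seq d)].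
Definition Lst (n : nat) := map (fun p => phi n p.1 p.2) (pairs n).

Lemma mem_pairs n d k : 0 < n -> ((d, k) \in pairs n) = (d %| n) && (k < a_seq d).
Proof.
move=> n0. apply/allpairsPdep/andP.
- move=> [d' [k' [h1 h2 [-> ->]]]]. split; first by rewrite dvdn_divisors.
  by move: h2; rewrite mem_iota.
- move=> [h1 h2]. exists d, k; split => //; first by rewrite -dvdn_divisors.
  by rewrite mem_iota.
Qed.

Lemma V1 n d k : 0 < n -> d %| n -> k < a_seq d -> valid n (phi n d k) /\ psi (phi n d k) = (d, k).
Proof.
move=> n0 dn ka. have d0 : 0 < d by apply: dvdn_gt0 dn.
case/dvdnP: dn => q nq.
have q0 : 0 < q by move: n0; rewrite nq; lia.
rewrite /phi. case: eqP => [k0|k0].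
  subst k. have -> : n %/ d = q by rewrite nq mulnK.
  rewrite /valid /psi /canon /= d0 q0 nq mulnC eqxx /=. split => //. by case: (odd q); case: (odd d).
have ev : ~~ odd d by apply/negP => od; move: ka; rewrite a_seq_odd //; lia.
move: ka; rewrite a_seq_even // => ka.
have E : n %/ d./2 = 2 * q.
  rewrite nq. have -> : q * d = (2 * q) * d./2 by move: ev; lia.
  rewrite mulnK //. move: ev d0; lia.
rewrite E. case: ifP => hk.
- rewrite /valid /psi /canon /=. have -> : odd (2 * q) = false by lia.
  have -> : (k == 0) = false by apply/eqP.
  split; last by congr pair; move: ev; lia.
  apply/and4P; split; try lia. apply/eqP; rewrite nq; move: ev; lia.
- have oh : odd d./2 by move: hk ka; case: (odd d./2); lia.
  rewrite /valid /psi /canon /= oh /=. have -> : odd (2 * q) = false by lia.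
  split; last by congr pair; move: ev oh hk ka; lia.
  apply/and4P; split; try lia. apply/eqP; rewrite nq; move: ev; lia.
Qed.

Lemma V2 n T : valid n T -> let p := psi T in [/\ p.1 %| n, p.2 < a_seq p.1 & phi n p.1 p.2 = T].
Proof.
case: T => [[s t] r] /and4P[s0 t0 /eqP nst]. rewrite /canon /psi /phi => cn /=.
subst n. case: eqP => [r0|r0].
  subst r. rewrite /= dvdn_mulr // mulKn //. split => //.
  case os: (odd s); [by rewrite a_seq_odd | rewrite a_seq_even ?os //; lia].
case: ifP => ot /=.
- move: cn; rewrite (negbTE ot) => cn.
  rewrite a_seq_even; last by lia.
  have h1 : (2 * s)./2 = s by lia.
  rewrite h1. have -> : (r == 0) = false by apply/eqP.
  rewrite cn. split.
  + apply/dvdnP; exists t./2; move: ot; lia.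
  + lia.
  + by rewrite mulKn.
- have ot' : odd t by move/negbFE: ot.
  rewrite a_seq_even; last by lia.
  have h1 : (2 * t)./2 = t by lia.
  rewrite h1. move: cn; rewrite ot'. case: ifP => os; first by move/eqP.
  move=> r1. have -> : r = 1 by lia.
  split.
  + apply/dvdnP; exists s./2; move: os; lia.
  + move: ot'; lia.
  + have -> : (uphalf t == 0) = false by lia.
    have -> : (uphalf t <= t./2) = false by move: ot'; lia.
    by rewrite mulnK.
Qed.

Lemma size_Lst n : size (Lst n) = \sum_(d <- divisors n) a_seq d.
Proof. rewrite size_map /pairs size_allpairs_dep sumnE big_map.
by apply: eq_bigr => d _; rewrite size_iota. Qed.

Lemma uniq_Lst n : 0 < n -> uniq (Lst n).
Proof.
move=> n0. rewrite map_inj_in_uniq.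
- rewrite /pairs. apply: allpairs_uniq_dep; first exact: divisors_uniq.
  + move=> d _; exact: iota_uniq.
  + by move=> [x1 y1] [x2 y2] _ _ /= [-> ->].
- move=> [d k] [d' k'] /= h h' e.
  move: h h'; rewrite !mem_pairs // => /andP[h1 h2] /andP[h1' h2'].
  have [_ E] := V1 n0 h1 h2. have [_ E'] := V1 n0 h1' h2'.
  by rewrite -E -E' e.
Qed.

Lemma Lst_valid n T : 0 < n -> T \in Lst n -> valid n T.
Proof. move=> n0 /mapP [[d k] h ->]. move: h; rewrite mem_pairs // => /andP[h1 h2].
by have [V _] := V1 n0 h1 h2. Qed.

Lemma valid_Lst n T : 0 < n -> valid n T -> T \in Lst n.
Proof. move=> n0 v. have [h1 h2 h3] := V2 v. apply/mapP; exists (psi T) => //.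
by case: (psi T) h1 h2 h3 => d k /= h1 h2 h3; rewrite ?h3 // mem_pairs // h1 h2. Qed.


Definition repT (T : nat * nat * nat) : KG -> Prop := rep T.1.1 T.1.2 (Posz T.2).

Theorem proposition9p8 (n : nat) : (1 <= n)%N ->
  num_conj_classes_index n (\sum_(d <- divisors n) a_seq d)%N.
Proof.
move=> n0. rewrite -size_Lst.
pose d0 := (1, 1, 0).
exists (fun i : 'I_(size (Lst n)) => repT (nth d0 (Lst n) i)).
split; [|split].
- move=> i. have := Lst_valid n0 (mem_nth d0 (ltn_ord i)).
  case: (nth d0 (Lst n) i) => [[s t] r] /and4P[s0 t0 /eqP e c].
  split; first exact: rep_sub.
  rewrite /repT /= -e. exact: rep_index.
- move=> i j hc. apply: val_inj => /=.
  have := Lst_valid n0 (mem_nth d0 (ltn_ord i)).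
  have := Lst_valid n0 (mem_nth d0 (ltn_ord j)).
  have := nth_uniq d0 (ltn_ord i) (ltn_ord j) (uniq_Lst n0).
  move: hc; rewrite /repT.
  case: (nth d0 (Lst n) i) => [[s t] r]; case: (nth d0 (Lst n) j) => [[s' t'] r'] /= hc.
  move=> E /and4P[s0' t0' _ c'] /and4P[s0 t0 _ c].
  have [d1 d2] := inv_div s0 t0 hc. have [d3 d4] := inv_div s0' t0' (conj_sym hc).
  have es : s = s' by apply/eqP; rewrite eqn_dvd d1 d3.
  have et : t = t' by apply/eqP; rewrite eqn_dvd d2 d4.
  subst s' t'. have er : r = r'.
    apply: (inv_r s0 t0 c c' hc).
  subst r'. by apply/eqP; rewrite -E.
- move=> H HH hi. have [s [t [r0 [s0 t0 e E]]]] := classify HH hi.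
  have [r' [c hc]] := normalize t r0 s0.
  have v : valid n (s, t, r') by rewrite /valid s0 t0 e eqxx c.
  have mem := valid_Lst n0 v.
  have lt : index (s, t, r') (Lst n) < size (Lst n) by rewrite index_mem.
  exists (Ordinal lt) => /=.
  rewrite nth_index //. rewrite /repT /=.
  apply: conj_extL hc => g; split => /E //.
Qed.
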